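(* Let $A=(a_{ij})$ and $B=(b_{ij})$ be two $n\times n$ generalized tournament matrices with the same principal minors of orders $2$ and $3$. For all pairwise distinct $i,j,k\in[n]$: (i) if $\{i,j\}\in P_{\neq}$ and $\{i,k\},\{j,k\}\in P_{=}$, then $a_{ik}=a_{jk}=b_{ik}=b_{jk}$; (ii) if $\{i,j\}\in P_{=}$ and $\{i,k\},\{j,k\}\in P_{\neq}$, then $a_{ik}=a_{jk}=1-b_{ik}=1-b_{jk}$; (iii) if $\{i,j\}\in P_{=}$ and $\{i,k\},\{j,k\}\notin P_{=}$, then $a_{ik}=1/2$ if and only if $a_{jk}=1/2$; (iv) if $\{i,j\}\in P_{\neq}$ and $\{i,k\},\{j,k\}\notin P_{\neq}$, then $a_{ik}=1/2$ if and only if $a_{jk}=1/2$.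
   Context: A generalized tournament matrix of order $n$ is a real $n\times n$ matrix $M=(m_{ij})$ with nonnegative entries satisfying $M+M^{t}=J_n-I_n$ ($J_n$ the all-ones matrix, $I_n$ the identity). Write $[n]=\{1,\ldots,n\}$. When $A$ and $B$ have the same principal minors of order $2$, for all $i\neq j$ one has $a_{ij}=b_{ij}$ or $a_{ij}=1-b_{ij}$, and the set of $2$-subsets of $[n]$ is partitioned into $P_{=}=\{\{i,j\}: a_{ij}=b_{ij},\ a_{ij}\neq 1/2\}$, $P_{\neq}=\{\{i,j\}: a_{ij}=1-b_{ij},\ a_{ij}\neq 1/2\}$, and $P_{1/2}=\{\{i,j\}: a_{ij}=b_{ij}=1/2\}$. *)

(* Defs.v *)
From mathcomp Require Import all_boot all_order all_algebra.
Set Implicit Arguments. Unset Strict Implicit. Unset Printing Implicit Defensive.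
Import Order.TTheory GRing.Theory Num.Theory.
Local Open Scope ring_scope.

Definition gen_tournament (R : numDomainType) (n : nat) (M : 'M[R]_n) : Prop :=
  (forall i j, 0 <= M i j) /\ (forall i j, M i j + M j i = (i != j)%:R).

Definition principal_submx (R : ringType) (n : nat) (M : 'M[R]_n)
    (S : {set 'I_n}) : 'M[R]_#|S| :=
  mxsub (fun i : 'I_#|S| => enum_val i) (fun i : 'I_#|S| => enum_val i) M.

Definition same_pminors (R : comRingType) (n k : nat) (A B : 'M[R]_n) : Prop :=
  forall S : {set 'I_n}, #|S| = k ->
    \det (principal_submx A S) = \det (principal_submx B S).

Definition in_Peq (R : fieldType) (n : nat) (A B : 'M[R]_n) (i j : 'I_n) : Prop :=
  A i j = B i j /\ A i j <> 2^-1.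
Definition in_Pneq (R : fieldType) (n : nat) (A B : 'M[R]_n) (i j : 'I_n) : Prop :=
  A i j = 1 - B i j /\ A i j <> 2^-1.

(* Main.v *)
Require Import Defs.
From mathcomp Require Import all_boot all_order all_algebra.
From mathcomp Require Import ring lra.
Set Implicit Arguments. Unset Strict Implicit.
Import Order.TTheory GRing.Theory Num.Theory.
Local Open Scope ring_scope.
Ltac normord :=
  repeat match goal with
  | |- context [@lift ?n ?x ?y] =>
      first [ rewrite (_ : @lift n x y = 0); [| by apply/val_inj]
            | rewrite (_ : @lift n x y = 1); [| by apply/val_inj]
            | rewrite (_ : @lift n x y = 2%:R); [| by apply/val_inj] ]
  | |- context [@ord0 ?n] => rewrite (_ : @ord0 n = 0); [| by apply/val_inj]
  end.
Lemma det2 (R : comNzRingType) (N : 'M[R]_2) : \det N = N 0 0 * N 1 1 - N 0 1 * N 1 0.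
Proof.
rewrite (expand_det_row _ 0) !big_ord_recl big_ord0 /cofactor !det_mx11 /= !mxE /=.
normord. rewrite !expr0 !expr1. ring.
Qed.
Lemma det3 (R : comNzRingType) (N : 'M[R]_3) : \det N =
  N 0 0 * N 1 1 * N 2 2 + N 0 1 * N 1 2 * N 2 0 + N 0 2 * N 1 0 * N 2 1
 - N 0 0 * N 1 2 * N 2 1 - N 0 1 * N 1 0 * N 2 2 - N 0 2 * N 1 1 * N 2 0.
Proof.
rewrite (expand_det_row _ 0) !big_ord_recl big_ord0 /cofactor !det2 /= !mxE /=.
normord. rewrite /bump /=. ring.
Qed.

Section Aux.
Variable R : realFieldType.

Lemma det_card2 m (N : 'M[R]_m) (o0 o1 : 'I_m) : val o0 = 0%N -> val o1 = 1%N ->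
  m = 2%N -> \det N = N o0 o0 * N o1 o1 - N o0 o1 * N o1 o0.
Proof.
move=> h0 h1 hm; subst m; rewrite det2.
have -> : o0 = 0 by apply/val_inj. by have -> : o1 = 1 by apply/val_inj.
Qed.

Lemma det_card3 m (N : 'M[R]_m) (o0 o1 o2 : 'I_m) : val o0 = 0%N -> val o1 = 1%N ->
  val o2 = 2%N -> m = 3%N -> \det N =
  N o0 o0 * N o1 o1 * N o2 o2 + N o0 o1 * N o1 o2 * N o2 o0 + N o0 o2 * N o1 o0 * N o2 o1
 - N o0 o0 * N o1 o2 * N o2 o1 - N o0 o1 * N o1 o0 * N o2 o2 - N o0 o2 * N o1 o1 * N o2 o0.
Proof.
move=> h0 h1 h2 hm; subst m; rewrite det3.
have -> : o0 = 0 by apply/val_inj. have -> : o1 = 1 by apply/val_inj.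
by have -> : o2 = 2%:R by apply/val_inj.
Qed.

Lemma diag0 n (M : 'M[R]_n) x : gen_tournament M -> M x x = 0.
Proof. case=> h1 h2; have := h2 x x; rewrite eqxx /= => h; have := h1 x x; lra. Qed.

Lemma offd n (M : 'M[R]_n) x y : gen_tournament M -> x != y -> M y x = 1 - M x y.
Proof. case=> _ h2 hxy; have := h2 x y; rewrite hxy /=; lra. Qed.

Lemma pm2 n (M : 'M[R]_n) i j : gen_tournament M -> i != j ->
  \det (principal_submx M [set i; j]) = - (M i j * M j i).
Proof.
move=> hM ij.
have hc : #|[set i; j]| = 2%N by rewrite cards2 ij.
have l0 : (0 < #|[set i; j]|)%N by rewrite hc.
have l1 : (1 < #|[set i; j]|)%N by rewrite hc.
rewrite (@det_card2 _ _ (Ordinal l0) (Ordinal l1)) // /principal_submx !mxE.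
set s0 := enum_val _; set s1 := enum_val _.
have d01 : s0 != s1 by apply/eqP => /enum_val_inj/(congr1 val).
have m0 : s0 \in [set i; j] := enum_valP _.
have m1 : s1 \in [set i; j] := enum_valP _.
rewrite (@diag0 _ _ s0 hM) (@diag0 _ _ s1 hM).
move: d01; case/set2P: m0 => ->; case/set2P: m1 => ->; rewrite ?eqxx // => _; ring.
Qed.

Lemma mem3 n (i j k x : 'I_n) : x \in [set i; j; k] -> x = i \/ x = j \/ x = k.
Proof. rewrite !inE => /orP [/orP [] | ] /eqP; auto. Qed.

Lemma card3 n (i j k : 'I_n) : i != j -> i != k -> j != k -> #|[set i; j; k]| = 3%N.
Proof. move=> ij ik jk; rewrite -setUA cardsU1 cards2 jk !inE negb_or ij ik. by []. Qed.

Lemma pm3 n (M : 'M[R]_n) i j k : gen_tournament M -> i != j -> i != k -> j != k ->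
  \det (principal_submx M [set i; j; k]) =
   M i j * M j k * M k i + M i k * M k j * M j i.
Proof.
move=> hM ij ik jk.
have hc : #|[set i; j; k]| = 3%N.
  rewrite -setUA cardsU1 cards2 jk !inE negb_or ij ik. by [].
have l0 : (0 < #|[set i; j; k]|)%N by rewrite hc.
have l1 : (1 < #|[set i; j; k]|)%N by rewrite hc.
have l2 : (2 < #|[set i; j; k]|)%N by rewrite hc.
rewrite (@det_card3 _ _ (Ordinal l0) (Ordinal l1) (Ordinal l2)) // /principal_submx !mxE.
set s0 := enum_val (Ordinal l0); set s1 := enum_val (Ordinal l1);
  set s2 := enum_val (Ordinal l2).
have d01 : s0 != s1 by apply/eqP => /enum_val_inj/(congr1 val).
have d02 : s0 != s2 by apply/eqP => /enum_val_inj/(congr1 val).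
have d12 : s1 != s2 by apply/eqP => /enum_val_inj/(congr1 val).
have m0 : s0 \in [set i; j; k] := enum_valP _.
have m1 : s1 \in [set i; j; k] := enum_valP _.
have m2 : s2 \in [set i; j; k] := enum_valP _.
rewrite (@diag0 _ _ s0 hM) (@diag0 _ _ s1 hM) (@diag0 _ _ s2 hM).
move: d01 d02 d12; case/mem3: m0 => [->|[->|->]]; case/mem3: m1 => [->|[->|->]]; case/mem3: m2 => [->|[->|->]];
  rewrite ?eqxx // => _ _ _; ring.
Qed.

Definition F (x y w : R) := x * y * (1 - w) + w * (1 - y) * (1 - x).

Lemma keyH (x y w x' y' w' : R) : F x y w = F x' y' w' ->
  ((x' = 1 - x /\ y' = y /\ w' = w) \/ (x' = x /\ y' = 1 - y /\ w' = 1 - w)) ->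
  x <> 2^-1 -> y = w.
Proof.
move=> E C hx.
have E2 : (2 * x - 1) * (y - w) = 0.
  move: E; case: C => [[-> [-> ->]] | [-> [-> ->]]]; rewrite /F => E; nra.
move/eqP: E2; rewrite mulf_eq0 => /orP [/eqP h | /eqP h]; last by lra.
exfalso; apply: hx; lra.
Qed.

Lemma two_choice (a b : R) : a * (1 - a) = b * (1 - b) -> b = a \/ b = 1 - a.
Proof.
move=> h; have : (b - a) * (b + a - 1) = 0 by nra.
move/eqP; rewrite mulf_eq0 => /orP [/eqP h1 | /eqP h1]; [left | right]; lra.
Qed.

End Aux.

Theorem lemma4p2 (R : realFieldType) (n : nat) (A B : 'M[R]_n) :
  gen_tournament A -> gen_tournament B ->
  same_pminors 2 A B -> same_pminors 3 A B ->
  forall i j k : 'I_n, i != j -> i != k -> j != k ->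
  [/\ (in_Pneq A B i j -> in_Peq A B i k -> in_Peq A B j k ->
         A i k = A j k /\ A j k = B i k /\ B i k = B j k),
      (in_Peq A B i j -> in_Pneq A B i k -> in_Pneq A B j k ->
         A i k = A j k /\ A j k = 1 - B i k /\ 1 - B i k = 1 - B j k),
      (in_Peq A B i j -> ~ in_Peq A B i k -> ~ in_Peq A B j k ->
         (A i k = 2^-1 <-> A j k = 2^-1)) &
      (in_Pneq A B i j -> ~ in_Pneq A B i k -> ~ in_Pneq A B j k ->
         (A i k = 2^-1 <-> A j k = 2^-1))].
Proof.
move=> hA hB h2 h3 i j k ij ik jk.
have c2 : forall p q, p != q -> B p q = A p q \/ B p q = 1 - A p q.
  move=> p q pq; apply: two_choice.
  have hc : #|[set p; q]| = 2%N by rewrite cards2 pq.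
  have := h2 [set p; q] hc.
  rewrite !pm2 // (offd hA pq) (offd hB pq) => e; nra.
have E : F (A i j) (A j k) (A i k) = F (B i j) (B j k) (B i k).
  have := h3 [set i; j; k] (card3 ij ik jk).
  rewrite !pm3 // (offd hA ik) (offd hA jk) (offd hA ij).
  rewrite (offd hB ik) (offd hB jk) (offd hB ij) /F => e; nra.
have half : 1 - (2^-1 : R) = 2^-1 by lra.
split.
- case=> [eij nij] [eik nik] [ejk njk].
  have L : B i j = 1 - A i j /\ B j k = A j k /\ B i k = A i k by split; lra.
  have := keyH E (or_introl L) nij; lra.
- case=> [eij nij] [eik nik] [ejk njk].
  have L : B i j = A i j /\ B j k = 1 - A j k /\ B i k = 1 - A i k by split; lra.
  have := keyH E (or_intror L) nij; lra.
- case=> [eij nij] nik njk; split => h.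
  + case: (eqVneq (A j k) 2^-1) => // /eqP hjk; exfalso.
    have bjk : B j k = 1 - A j k.
      case: (c2 j k jk) => // e; exfalso; apply: njk; split => //; lra.
    have bik : B i k = 1 - A i k by case: (c2 i k ik); lra.
    have := keyH E (or_intror (conj (esym eij) (conj bjk bik))) nij; lra.
  + case: (eqVneq (A i k) 2^-1) => // /eqP hik; exfalso.
    have bik : B i k = 1 - A i k.
      case: (c2 i k ik) => // e; exfalso; apply: nik; split => //; lra.
    have bjk : B j k = 1 - A j k by case: (c2 j k jk); lra.
    have := keyH E (or_intror (conj (esym eij) (conj bjk bik))) nij; lra.
- case=> [eij nij] nik njk; split => h.
  + case: (eqVneq (A j k) 2^-1) => // /eqP hjk; exfalso.
    have bjk : B j k = A j k.
      case: (c2 j k jk) => // e; exfalso; apply: njk; split => //; lra.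
    have bik : B i k = A i k by case: (c2 i k ik); lra.
    have bij : B i j = 1 - A i j by lra.
    have := keyH E (or_introl (conj bij (conj bjk bik))) nij; lra.
  + case: (eqVneq (A i k) 2^-1) => // /eqP hik; exfalso.
    have bik : B i k = A i k.
      case: (c2 i k ik) => // e; exfalso; apply: nik; split => //; lra.
    have bjk : B j k = A j k by case: (c2 j k jk); lra.
    have bij : B i j = 1 - A i j by lra.
    have := keyH E (or_introl (conj bij (conj bjk bik))) nij; lra.
Qed.
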